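(* Consider the two-stage robust problem $\min_{x\in\mathcal X}c_1x+\max_{u\in\mathcal U(x)}\min_{y\in\mathcal Y(x,u)}c_2y$ with decision-dependent uncertainty set $\mathcal U(x)=\{u\in\{0,1\}^{m_u}: Fu\le h,\ u\le x'\}$, where $x'\in\{0,1\}^{m_u}$ is a subvector of binary first-stage variables of $x$, and suppose the set $\mathcal U^0=\{u\in\{0,1\}^{m_u}: Fu\le h\}$ is downward closed (if $u^1\in\mathcal U^0$, $u^2\in\{0,1\}^{m_u}$ and $u^2\le u^1$ then $u^2\in\mathcal U^0$). Then this problem is equivalent to the decision-independent two-stage robust problem $\min_{x\in\mathcal X}c_1x+\max_{u\in\mathcal U^0}\min_{y\in\bar{\mathcal Y}(x,u)}c_2y$, where $\bar{\mathcal Y}(x,u)=\{y\in\mathbb Z^{m_y}_+\times\mathbb R^{n_y}_+: B_2y\ge d-B_1x-E(u\circ x')\}$; equivalently, with the recourse feasible set replaced by $\{(y,v)\in(\mathbb Z^{m_y}_+\times\mathbb R^{n_y}_+)\times\mathbb R^{m_u}_+: B_2y\ge d-B_1x-Ev,\ v\le x',\ v\le u,\ v\ge x'+u-\mathbf 1\}$.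
   Context: $\mathcal X=\{x\in\mathbb Z^{m_x}_+\times\mathbb R^{n_x}_+: Ax\ge b\}$ (containing the binary subvector $x'$), $\mathcal Y(x,u)=\{y\in\mathbb Z^{m_y}_+\times\mathbb R^{n_y}_+: B_2y\ge d-B_1x-Eu\}$. $a\circ b$ denotes the componentwise (Hadamard) product and $\mathbf 1$ the all-ones vector. The optimal value of an infeasible minimization (maximization) problem is $+\infty$ ($-\infty$). Two formulations are called equivalent if they have the same optimal value and any optimal first-stage solution of one is optimal for the other, and vice versa. *)

(* Defs.v *)
From HB Require Import structures.
From mathcomp Require Import all_boot all_order all_algebra.
From mathcomp Require Import boolp classical_sets reals constructive_ereal ereal.
Set Implicit Arguments. Unset Strict Implicit. Unset Printing Implicit Defensive.
Import Order.TTheory GRing.Theory Num.Theory.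
Local Open Scope ring_scope.
Local Open Scope classical_set_scope.

Section Defs.
Variable R : realType.

Definition lev (n : nat) (u v : 'cV[R]_n) : Prop := forall i, u i 0 <= v i 0.

Definition binvec (n : nat) (u : 'cV[R]_n) : Prop :=
  forall i, u i 0 = 0 \/ u i 0 = 1.

Definition mixint (m n : nat) (z : 'cV[R]_(m + n)) : Prop :=
  forall i : 'I_(m + n), 0 <= z i 0 /\ ((i < m)%N -> z i 0 \is a Num.int).

Definition xsub (N mu : nat) (sel : 'I_mu -> 'I_N) (x : 'cV[R]_N) : 'cV[R]_mu :=
  \col_j x (sel j) 0.

Definition hadamard (n : nat) (u v : 'cV[R]_n) : 'cV[R]_n := \col_j (u j 0 * v j 0).

Definition Xset (mx nx p : nat) (A : 'M[R]_(p, mx + nx)) (b : 'cV[R]_p) :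
  set 'cV[R]_(mx + nx) := [set x | mixint x /\ lev b (A *m x)].

Definition U0set (mu r : nat) (F : 'M[R]_(r, mu)) (h : 'cV[R]_r) : set 'cV[R]_mu :=
  [set u | binvec u /\ lev (F *m u) h].

Definition Uset (N mu r : nat) (F : 'M[R]_(r, mu)) (h : 'cV[R]_r)
  (sel : 'I_mu -> 'I_N) (x : 'cV[R]_N) : set 'cV[R]_mu :=
  [set u | binvec u /\ lev (F *m u) h /\ lev u (xsub sel x)].

Definition Yset (N mu q my ny : nat) (B1 : 'M[R]_(q, N)) (B2 : 'M[R]_(q, my + ny))
  (E : 'M[R]_(q, mu)) (d : 'cV[R]_q) (x : 'cV[R]_N) (u : 'cV[R]_mu) :
  set 'cV[R]_(my + ny) :=
  [set y | mixint y /\ lev (d - B1 *m x - E *m u) (B2 *m y)].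

Definition Ybarset (N mu q my ny : nat) (B1 : 'M[R]_(q, N)) (B2 : 'M[R]_(q, my + ny))
  (E : 'M[R]_(q, mu)) (d : 'cV[R]_q) (sel : 'I_mu -> 'I_N)
  (x : 'cV[R]_N) (u : 'cV[R]_mu) : set 'cV[R]_(my + ny) :=
  [set y | mixint y /\ lev (d - B1 *m x - E *m hadamard u (xsub sel x)) (B2 *m y)].

Definition YVset (N mu q my ny : nat) (B1 : 'M[R]_(q, N)) (B2 : 'M[R]_(q, my + ny))
  (E : 'M[R]_(q, mu)) (d : 'cV[R]_q) (sel : 'I_mu -> 'I_N)
  (x : 'cV[R]_N) (u : 'cV[R]_mu) : set ('cV[R]_(my + ny) * 'cV[R]_mu) :=
  [set yv | mixint yv.1 /\ lev 0 yv.2 /\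
            lev (d - B1 *m x - E *m yv.2) (B2 *m yv.1) /\
            lev yv.2 (xsub sel x) /\ lev yv.2 u /\
            lev (xsub sel x + u - const_mx 1) yv.2].

Definition lin (n : nat) (c : 'rV[R]_n) (z : 'cV[R]_n) : R := (c *m z) 0 0.

(* objective of a two-stage robust problem at first-stage x:
   c1 x + sup_{u in U} inf_{w in W u} cost w   (sup of empty = -oo, inf of empty = +oo) *)
Definition twostage_obj (N : nat) (U W : Type) (c1 : 'rV[R]_N) (x : 'cV[R]_N)
  (Uc : set U) (Wc : U -> set W) (cost : W -> R) : \bar R :=
  ((lin c1 x)%:E + ereal_sup [set ereal_inf [set (cost w)%:E | w in Wc u] | u in Uc])%E.

Definition optval (T : Type) (X : set T) (f : T -> \bar R) : \bar R :=
  ereal_inf [set f x | x in X].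

Definition optimal (T : Type) (X : set T) (f : T -> \bar R) (x : T) : Prop :=
  X x /\ f x = optval X f.

Definition equivalent (T : Type) (X : set T) (f g : T -> \bar R) : Prop :=
  optval X f = optval X g /\ (forall x, optimal X f x <-> optimal X g x).

End Defs.

(* Main.v *)
Require Import Defs.
From HB Require Import structures.
From mathcomp Require Import all_boot all_order all_algebra.
From mathcomp Require Import boolp classical_sets reals constructive_ereal ereal.
From mathcomp Require Import lra.
Import Order.TTheory GRing.Theory Num.Theory.
Local Open Scope ring_scope.
Local Open Scope classical_set_scope.

Section Helpers.
Variable R : realType.

Lemma had_le n (u x : 'cV[R]_n) : binvec u -> binvec x -> lev u x -> hadamard u x = u.
Proof.
move=> bu bx le; apply/matrixP => i j; rewrite (ord1 j) !mxE.
have := le i; case: (bu i) => ->; case: (bx i) => -> ; lra.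
Qed.

Lemma had_bin n (u x : 'cV[R]_n) : binvec u -> binvec x -> binvec (hadamard u x).
Proof.
move=> bu bx i; rewrite !mxE.
case: (bu i) => ->; case: (bx i) => -> ; rewrite ?mul0r ?mul1r; auto.
Qed.

Lemma had_leu n (u x : 'cV[R]_n) : binvec u -> binvec x -> lev (hadamard u x) u.
Proof.
move=> bu bx i; rewrite !mxE.
case: (bu i) => ->; case: (bx i) => -> ; lra.
Qed.

Lemma had_lex n (u x : 'cV[R]_n) : binvec u -> binvec x -> lev (hadamard u x) x.
Proof.
move=> bu bx i; rewrite !mxE.
case: (bu i) => ->; case: (bx i) => -> ; lra.
Qed.

Lemma had_ge0 n (u x : 'cV[R]_n) : binvec u -> binvec x -> lev 0 (hadamard u x).
Proof.
move=> bu bx i; rewrite !mxE.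
case: (bu i) => ->; case: (bx i) => -> ; lra.
Qed.

Lemma had_low n (u x : 'cV[R]_n) : binvec u -> binvec x ->
  lev (x + u - const_mx 1) (hadamard u x).
Proof.
move=> bu bx i; rewrite !mxE.
case: (bu i) => ->; case: (bx i) => -> ; lra.
Qed.

Lemma had_uniq n (u x v : 'cV[R]_n) : binvec u -> binvec x ->
  lev 0 v -> lev v x -> lev v u -> lev (x + u - const_mx 1) v -> v = hadamard u x.
Proof.
move=> bu bx h0 h1 h2 h3; apply/matrixP => i j; rewrite (ord1 j) !mxE.
have := h0 i; have := h1 i; have := h2 i; have := h3 i; rewrite !mxE.
case: (bu i) => ->; case: (bx i) => -> ; lra.
Qed.

End Helpers.
Arguments had_le {R n u x}.
Arguments had_bin {R n u x}.
Arguments had_leu {R n u x}.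
Arguments had_lex {R n u x}.
Arguments had_ge0 {R n u x}.
Arguments had_low {R n u x}.
Arguments had_uniq {R n u x v}.

Theorem proposition3 (R : realType) (mx nx my ny mu p q r : nat)
  (A : 'M[R]_(p, mx + nx)) (b : 'cV[R]_p)
  (B1 : 'M[R]_(q, mx + nx)) (B2 : 'M[R]_(q, my + ny)) (E : 'M[R]_(q, mu))
  (d : 'cV[R]_q) (F : 'M[R]_(r, mu)) (h : 'cV[R]_r)
  (c1 : 'rV[R]_(mx + nx)) (c2 : 'rV[R]_(my + ny))
  (sel : 'I_mu -> 'I_(mx + nx))
  (* x' is a subvector of binary first-stage variables of x *)
  (sel_inj : injective sel)
  (sel_int : forall j, (sel j < mx)%N)
  (sel_bin : forall x, Xset A b x -> binvec (xsub sel x))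
  (* U^0 is downward closed *)
  (U0_down : forall u1 u2 : 'cV[R]_mu, U0set F h u1 -> binvec u2 -> lev u2 u1 ->
             U0set F h u2) :
  let f := fun x => twostage_obj c1 x (Uset F h sel x) (Yset B1 B2 E d x) (lin c2) in
  let g := fun x => twostage_obj c1 x (U0set F h) (Ybarset B1 B2 E d sel x) (lin c2) in
  let g' := fun x => twostage_obj c1 x (U0set F h) (YVset B1 B2 E d sel x)
                       (fun yv => lin c2 yv.1) in
  equivalent (Xset A b) f g /\ equivalent (Xset A b) f g'.
Proof.
move=> f g g'.
have equivP : forall h1 h2 : 'cV[R]_(mx + nx) -> \bar R,
    (forall x, Xset A b x -> h1 x = h2 x) -> equivalent (Xset A b) h1 h2.
  move=> h1 h2 H.
  have Ho : optval (Xset A b) h1 = optval (Xset A b) h2.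
    rewrite /optval; congr ereal_inf; apply/seteqP; split => _ [x Xx <-];
      exists x => //; by rewrite H.
  split => // x; split => -[Xx e]; split => //.
    by rewrite -H // e Ho.
  by rewrite H // e Ho.
have fg : forall x, Xset A b x -> f x = g x.
  move=> x Xx; have bx := sel_bin x Xx.
  rewrite /f /g /twostage_obj; congr (_ + _)%E; congr ereal_sup.
  apply/seteqP; split.
    move=> _ [u [ub [Fu ux]] <-]; exists u; first by [].
    by rewrite /Ybarset had_le.
  move=> _ [u [ub Fu] <-]; exists (hadamard u (xsub sel x)).
    split; first exact: had_bin.
    split; last exact: had_lex.
    have [] := U0_down u (hadamard u (xsub sel x)) (conj ub Fu) (had_bin ub bx) (had_leu ub bx) => //.
  by [].
have gg' : forall x, Xset A b x -> g x = g' x.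
  move=> x Xx; have bx := sel_bin x Xx.
  rewrite /g /g' /twostage_obj; congr (_ + _)%E; congr ereal_sup.
  have inner : forall u, U0set F h u ->
      [set (lin c2 y)%:E | y in Ybarset B1 B2 E d sel x u] =
      [set (lin c2 w.1)%:E | w in YVset B1 B2 E d sel x u].
    move=> u [ub Fu]; apply/seteqP; split.
      move=> _ [y [my0 hy] <-]; exists (y, hadamard u (xsub sel x)); last by [].
      split; first exact: my0.
      split; first exact: had_ge0.
      split; first exact: hy.
      split; first exact: had_lex.
      split; first exact: had_leu.
      exact: had_low.
    move=> _ [[y v] [/= my0 [h0 [hy [h1 [h2 h3]]]]] <-]; exists y; last by [].
    split; first exact: my0.
    by rewrite -(had_uniq ub bx h0 h1 h2 h3).
  apply/seteqP; split => _ [u Uu <-]; exists u => //; by rewrite inner.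
split; apply: equivP => x Xx; first exact: fg.
by rewrite fg // gg'.
Qed.
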